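(* Let $\mathcal{X}$ be a finite set, let $\underline{T}$ be a lower transition operator on $\mathcal{L}(\mathcal{X})$ and let $(\underline{T}_n)_{n\in\mathbb{N}}$ be a sequence of lower transition operators on $\mathcal{L}(\mathcal{X})$. Then $\|\underline{T}_n-\underline{T}\|\to0$ if and only if $\underline{T}_nf\to\underline{T}f$ for every $f\in\mathcal{L}(\mathcal{X})$.
   Context: $\mathcal{L}(\mathcal{X})$ is the set of real-valued functions on $\mathcal{X}$ with the maximum norm $\|f\|=\max_{x}|f(x)|$. For non-negatively homogeneous operators $A\colon\mathcal{L}(\mathcal{X})\to\mathcal{L}(\mathcal{X})$ (i.e. $A(\lambda f)=\lambda Af$ for $\lambda\ge0$), $\|A\|\coloneqq\sup\{\|Af\|\colon\|f\|=1\}$. A lower transition operator is a map $\underline{T}\colon\mathcal{L}(\mathcal{X})\to\mathcal{L}(\mathcal{X})$ such that for all $f,g$ and $\lambda\ge0$: $\underline{T}f\ge\min f$ (pointwise); $\underline{T}(f+g)\ge\underline{T}f+\underline{T}g$; $\underline{T}(\lambda f)=\lambda\underline{T}f$. *)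

(* Defs.v *)
From HB Require Import structures.
From mathcomp Require Import all_boot all_order all_algebra.
From mathcomp Require Import all_classical all_reals all_analysis.
Set Implicit Arguments. Unset Strict Implicit. Unset Printing Implicit Defensive.
Import Order.TTheory GRing.Theory Num.Theory.
Local Open Scope classical_set_scope.
Local Open Scope ring_scope.

Section Defs.
Variables (R : realType) (X : finType).

Definition maxnorm (f : X -> R) : R := \big[Num.max/0]_(x : X) `|f x|.

Definition opnorm (A : (X -> R) -> (X -> R)) : R :=
  sup [set maxnorm (A f) | f in [set f | maxnorm f = 1]].

Definition opsub (A B : (X -> R) -> (X -> R)) : (X -> R) -> (X -> R) :=
  fun f x => A f x - B f x.

Definition lower_transition_operator (T : (X -> R) -> (X -> R)) : Prop :=
  [/\ (forall f x, inf (range f) <= T f x),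
      (forall f g x, T f x + T g x <= T (fun y => f y + g y) x) &
      (forall (l : R) f, 0 <= l -> T (fun y => l * f y) = (fun y => l * T f y))].

End Defs.

(* Main.v *)
Require Import Defs.
From HB Require Import structures.
From mathcomp Require Import all_boot all_order all_algebra.
From mathcomp Require Import all_classical all_reals all_analysis.
From mathcomp Require Import ring lra.
Set Implicit Arguments. Unset Strict Implicit.
Import numFieldNormedType.Exports.
Import Order.TTheory GRing.Theory Num.Theory.
Local Open Scope classical_set_scope.
Local Open Scope ring_scope.

Section Aux.
Variables (R : realType) (X : finType).
Implicit Types f g : X -> R.

Lemma maxnorm_ge0 f : 0 <= maxnorm f.
Proof. by apply: (big_ind (fun v => 0 <= v)) => // a b ? ?; rewrite le_max; apply/orP; left. Qed.

Lemma maxnorm_ge f x : `|f x| <= maxnorm f.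
Proof. by rewrite /maxnorm (bigD1 x) //= le_max lexx. Qed.

Lemma maxnorm_le f c : 0 <= c -> (forall x, `|f x| <= c) -> maxnorm f <= c.
Proof.
move=> c0 H; apply: (big_ind (fun v => v <= c)) => // a b ? ?.
by rewrite ge_max; apply/andP.
Qed.

Lemma maxnormZ f c : 0 <= c -> maxnorm (fun x => c * f x) = c * maxnorm f.
Proof.
move=> c0; apply/eqP; rewrite eq_le; apply/andP; split.
  apply: maxnorm_le; first by rewrite mulr_ge0 // maxnorm_ge0.
  by move=> x; rewrite normrM ger0_norm // ler_wpM2l // maxnorm_ge.
have [->|cn0] := eqVneq c 0; first by rewrite mul0r maxnorm_ge0.
have cp : 0 < c by rewrite lt_neqAle eq_sym cn0.
rewrite -ler_pdivlMl //; apply: maxnorm_le.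
  by rewrite mulr_ge0 ?invr_ge0 // maxnorm_ge0.
move=> x; rewrite ler_pdivlMl //.
by have := maxnorm_ge (fun x => c * f x) x; rewrite normrM ger0_norm.
Qed.

Variable T : (X -> R) -> (X -> R).
Hypothesis HT : lower_transition_operator T.

Lemma lto0 x : T (fun _ => 0) x = 0.
Proof.
case: HT => _ _ H3; have := H3 0 (fun _ => 0) (lexx 0).
under [fun y => 0 * _]funext do rewrite mul0r.
by move=> ->; rewrite mul0r.
Qed.

Lemma lto_ge f x : - maxnorm f <= T f x.
Proof.
case: HT => H1 _ _; apply: le_trans (H1 f x).
have [[y _]|X0] := pselect (exists y : X, True).
  apply: lb_le_inf; first by exists (f y), y.
  move=> _ [z _ <-]; rewrite lerNl; apply: le_trans (maxnorm_ge f z).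
  by rewrite -normrN ler_norm.
have -> : range f = set0.
  apply/seteqP; split => [r [z _ _]|r //].
  by exfalso; apply: X0; exists z.
by rewrite inf0 lerNl oppr0 maxnorm_ge0.
Qed.

Lemma lto_le f x : T f x <= maxnorm f.
Proof.
case: HT => _ H2 _; have := H2 f (fun y => - f y) x.
under [fun y => f y + - f y]funext do rewrite subrr.
rewrite lto0 => H; rewrite -lerN2.
have <- : maxnorm (fun y => - f y) = maxnorm f.
  by rewrite /maxnorm; apply: eq_bigr => i _; rewrite normrN.
apply: le_trans (lto_ge _ x) _.
by rewrite -subr_ge0 -opprD oppr_ge0.
Qed.

Lemma lto_lip f g x : `|T f x - T g x| <= maxnorm (fun y => f y - g y).
Proof.
case: HT => _ H2 _.
have key : forall f0 g0, T g0 x - T f0 x <= maxnorm (fun y => f0 y - g0 y).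
  move=> f0 g0; have := H2 g0 (fun y => f0 y - g0 y) x.
  under [fun y => g0 y + (f0 y - g0 y)]funext do rewrite addrC subrK.
  move=> H; have := lto_ge (fun y => f0 y - g0 y) x; lra.
have e : maxnorm (fun y => f y - g y) = maxnorm (fun y => g y - f y).
  by rewrite /maxnorm; apply: eq_bigr => i _; rewrite distrC.
have := key f g; have := key g f; rewrite ler_norml -e; lra.
Qed.

End Aux.

Section Op.
Variables (R : realType) (X : finType).
Variables (A B : (X -> R) -> (X -> R)).
Hypotheses (HA : lower_transition_operator A) (HB : lower_transition_operator B).

Lemma diff_bound f : maxnorm (fun x => A f x - B f x) <= 2 * maxnorm f.
Proof.
apply: maxnorm_le; first by rewrite mulr_ge0 // maxnorm_ge0.
move=> x; have := lto_ge HA f x; have := lto_le HA f x.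
have := lto_ge HB f x; have := lto_le HB f x.
rewrite ler_norml; lra.
Qed.

Let E := [set maxnorm (opsub A B f) | f in [set f : X -> R | maxnorm f = 1]].

Lemma E_ub : has_ubound E.
Proof.
exists 2 => _ [f /= f1 <-]; have := diff_bound f; rewrite f1 mulr1; exact.
Qed.

Lemma opnorm_ge g : maxnorm g = 1 -> maxnorm (opsub A B g) <= opnorm (opsub A B).
Proof. by move=> g1; apply: (ub_le_sup E_ub); exists g. Qed.

Lemma opnorm_ge0 : 0 <= opnorm (opsub A B).
Proof.
have [[g g1]|N] := pselect (exists g : X -> R, maxnorm g = 1).
  exact: le_trans (maxnorm_ge0 _) (opnorm_ge g1).
rewrite /opnorm (_ : [set _ | _ in _] = set0) ?sup0 //.
apply/seteqP; split => [r [g g1 _]|r //]; by exfalso; apply: N; exists g.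
Qed.

Lemma opnorm_le c : 0 <= c ->
  (forall g, maxnorm g = 1 -> maxnorm (opsub A B g) <= c) -> opnorm (opsub A B) <= c.
Proof.
move=> c0 H.
have [[g g1]|N] := pselect (exists g : X -> R, maxnorm g = 1).
  apply: ge_sup; first by exists (maxnorm (opsub A B g)), g.
  by move=> _ [f f1 <-]; apply: H.
rewrite /opnorm (_ : [set _ | _ in _] = set0) ?sup0 //.
apply/seteqP; split => [r [g g1 _]|r //]; by exfalso; apply: N; exists g.
Qed.

Lemma homog (T : (X -> R) -> (X -> R)) (HT : lower_transition_operator T) m f x :
  0 <= m -> T (fun y => m * f y) x = m * T f x.
Proof. by case: HT => _ _ H3 m0; rewrite H3. Qed.

Lemma pointwise f :
  maxnorm (fun x => A f x - B f x) <= maxnorm f * opnorm (opsub A B).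
Proof.
have := erefl (maxnorm f); move: {2}(maxnorm f) => m em; rewrite em.
have [m0|mn0] := eqVneq m 0.
  have ef : f = (fun _ => 0).
    apply: funext => x; apply/eqP; rewrite -normr_le0 -m0 -em; exact: maxnorm_ge.
  rewrite m0 mul0r; apply: maxnorm_le => // x.
  by rewrite ef !lto0 // subrr normr0.
have mp : 0 < m by rewrite lt_neqAle eq_sym mn0 -em maxnorm_ge0.
pose g := fun y => m^-1 * f y.
have g1 : maxnorm g = 1 by rewrite maxnormZ ?invr_ge0 ?ltW // em mulVf.
have ef : f = (fun y => m * g y).
  by apply: funext => y; rewrite /g mulrA mulfV // mul1r.
have -> : (fun x => A f x - B f x) = (fun x => m * (A g x - B g x)).
  by apply: funext => x; rewrite ef !homog ?ltW ?invr_gt0 // mulrBr.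
rewrite (maxnormZ _ (ltW mp)) ler_pM2l //; exact: opnorm_ge.
Qed.

End Op.

Theorem proposition1 (R : realType) (X : finType)
  (T : (X -> R) -> (X -> R)) (Tn : nat -> (X -> R) -> (X -> R)) :
  lower_transition_operator T ->
  (forall n, lower_transition_operator (Tn n)) ->
  (opnorm (opsub (Tn n) T) @[n --> \oo] --> 0) <->
  (forall f : X -> R,
     maxnorm (fun x => Tn n f x - T f x) @[n --> \oo] --> 0).
Proof.
move=> HT HTn; split.
  move=> Hop f; apply/cvgr0Pnorm_lt => e e0.
  set m := maxnorm f.
  have m0 : 0 <= m := maxnorm_ge0 f.
  have ep : 0 < e / (m + 1) by rewrite divr_gt0 // ltr_wpDl.
  have /cvgr0Pnorm_lt/(_ _ ep) H := Hop.
  apply: filterS H => n /= Hn.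
  have h := pointwise (HTn n) HT f.
  have o0 := opnorm_ge0 (HTn n) HT.
  rewrite ger0_norm ?maxnorm_ge0 //.
  rewrite ger0_norm // in Hn.
  have ee : e = e / (m + 1) * (m + 1) by rewrite divfK // gt_eqF // ltr_wpDl.
  set e' := e / (m + 1) in ep Hn ee.
  have : m * opnorm (opsub (Tn n) T) <= m * e' by rewrite ler_wpM2l // ltW.
  rewrite -/m in h; nra.
move=> Hf; apply/cvgr0Pnorm_lt => e e0.
pose N := (Num.truncn (4 / e)).+1.
have NgtE : 4 / e < N%:R by rewrite truncnS_gt.
have Np : 0 < (N%:R : R) by rewrite ltr0n.
pose d := (N%:R : R)^-1.
have dN : d * N%:R = 1 by rewrite mulVf // gt_eqF.
have dp : 0 < d by rewrite invr_gt0.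
have e4 : 4 < N%:R * e by rewrite -ltr_pdivrMr.
have de : 4 * d < e by nra.
pose hv (h : {ffun X -> 'I_(2 * N).+1}) : X -> R := fun x => (h x)%:R * d - 1.
have e2 : 0 < e / 2 by rewrite divr_gt0.
have H : \forall n \near \oo, forall h : {ffun X -> 'I_(2 * N).+1},
    `|maxnorm (fun x => Tn n (hv h) x - T (hv h) x)| < e / 2.
  apply: filter_forall => h; have /cvgr0Pnorm_lt/(_ _ e2) := Hf (hv h); exact.
apply: filterS H => n /= Hn.
rewrite ger0_norm ?opnorm_ge0 //.
apply: (@le_lt_trans _ _ (e / 2 + 2 * d)); last by lra.
apply: opnorm_le => //; first by lra.
move=> g g1.
pose h : {ffun X -> 'I_(2 * N).+1} := [ffun x => inord (Num.truncn ((g x + 1) * N%:R))].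
have gh : maxnorm (fun y => g y - hv h y) <= d.
  apply: maxnorm_le => [|x]; first exact: ltW.
  have gx := maxnorm_ge g x; rewrite g1 ler_norml in gx.
  have y0 : 0 <= (g x + 1) * N%:R by rewrite mulr_ge0 //; lra.
  have := truncn_itv y0; set k := Num.truncn _ => /andP [k1 k2].
  have kle : (k <= 2 * N)%N.
    rewrite truncn_le_nat -natr1 natrM; nra.
  rewrite /hv /h ffunE inordK ?ltnS //.
  rewrite -natr1 in k2.
  have hk : g x = ((g x + 1) * N%:R) * d - 1.
    by rewrite -mulrA (mulrC (N%:R)) dN mulr1 addrK.
  rewrite ler_norml; nra.
have Hh := Hn h; rewrite ger0_norm ?maxnorm_ge0 // in Hh.
apply: maxnorm_le => [|x]; first by lra.
have l1 := lto_lip (HTn n) g (hv h) x.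
have l2 := lto_lip HT (hv h) g x.
have l3 := maxnorm_ge (fun x => Tn n (hv h) x - T (hv h) x) x.
have ee : maxnorm (fun y => hv h y - g y) = maxnorm (fun y => g y - hv h y).
  by rewrite /maxnorm; apply: eq_bigr => i _; rewrite distrC.
rewrite ee in l2.
rewrite /opsub /=.
have tri : `|Tn n g x - T g x| <= `|Tn n g x - Tn n (hv h) x| +
   `|Tn n (hv h) x - T (hv h) x| + `|T (hv h) x - T g x|.
  move: (Tn n g x) (Tn n (hv h) x) (T (hv h) x) (T g x) => a b c w.
  have -> : a - w = (a - b) + (b - c) + (c - w) by ring.
  apply: le_trans (ler_normD _ _) _; rewrite lerD2r; exact: ler_normD.
lra.
Qed.
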